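(* Let $p < q < r$ be primes such that $\{p, q, r\}$ is a symmetric triple. Then $q \leq \frac{3p-1}{2}$, and either $r = 2p-1$ or $q < r \leq \frac{3p-1}{2}$.
   Context: Two distinct primes $p$ and $q$ form a symmetric pair if $\gcd(p-1, q-1) = |p-q|$. A symmetric triple is a set of three primes such that any two of them form a symmetric pair. *)

(* Defs.v *)
From mathcomp Require Import all_boot.

Definition natdist (p q : nat) : nat := maxn p q - minn p q.

Definition symmetric_pair (p q : nat) : Prop :=
  [/\ prime p, prime q, p <> q & gcdn p.-1 q.-1 = natdist p q].

Definition symmetric_triple (p q r : nat) : Prop :=
  [/\ symmetric_pair p q, symmetric_pair p r & symmetric_pair q r].

(* Main.v *)
Require Import Defs.
From mathcomp Require Import all_boot.
From mathcomp Require Import zify.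

Lemma half_div (d n : nat) : d %| n -> 0 < n -> d < n -> 2 * d <= n.
Proof.
move=> /dvdnP [k ->] Hn Hlt.
case: k Hn Hlt => [|[|k]] /=; nia.
Qed.

Lemma dist_div (p q : nat) : p < q -> symmetric_pair p q -> (q - p) %| p.-1.
Proof.
move=> Hpq [_ _ _ H].
have E : natdist p q = q - p.
  rewrite /natdist; have /maxn_idPr -> : p <= q by exact: ltnW.
  by have /minn_idPl -> : p <= q by exact: ltnW.
by rewrite -E -H dvdn_gcdl.
Qed.

(* q <= (3p-1)/2 is stated as 2*q <= 3*p - 1 (exact since p >= 2). *)
Theorem corollary1 (p q r : nat) :
  prime p -> prime q -> prime r -> p < q -> q < r ->
  symmetric_triple p q r ->
  2 * q <= 3 * p - 1 /\ (r = 2 * p - 1 \/ (q < r /\ 2 * r <= 3 * p - 1)).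
Proof.
move=> pp _ _ Hpq Hqr [H1 H2 _].
have p2 := prime_gt1 pp.
have Da := @dist_div p q Hpq H1.
have Db := @dist_div p r (ltn_trans Hpq Hqr) H2.
have Pp : 0 < p.-1 by lia.
have Lb : r - p <= p.-1 by apply: dvdn_leq.
have La : 2 * (q - p) <= p.-1 by apply: half_div => //; lia.
split; first lia.
have [Eb|Lt] := eqVneq (r - p) p.-1; first by left; lia.
have Hb : 2 * (r - p) <= p.-1 by apply: half_div => //; lia.
right; split => //; lia.
Qed.
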